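(* Let $Q$ be a real affine space modelled on a real vector space $V$. For all $f,f'\in A(Q)$, all $n\in\mathbb N$, $q\in Q$ and $v_1,\dots,v_n\in V$, $$\delta^n(ff')(q;v_1,\dots,v_n)=\sum_{\substack{(I,I')\\ I\cup I'=N}}\delta^{|I|}f(q;\mathbf v^{I})\,\delta^{|I'|}f'(q;\mathbf v^{I'}),$$ where the sum runs over all ordered pairs $(I,I')$ of (possibly empty, possibly overlapping) subsets of $N=\{1,\dots,n\}$ with $I\cup I'=N$.
   Context: $A(Q)$ is the space of real functions on $Q$; $ff'$ is the pointwise product. For $I=\{i_1<\dots<i_m\}\subset N$, $\mathbf v^I=(v_{i_1},\dots,v_{i_m})$. The $m$-th polarization of $f\in A(Q)$ is $\delta^0f=f$ (so $\delta^0 f(q;\mathbf v^\emptyset)=f(q)$) and for $m\ge1$ $$\delta^m f(q;w_1,\dots,w_m)=(-1)^m\sum_{J\subset\{1,\dots,m\}}(-1)^{|J|}f\Big(q+\sum_{j\in J}w_j\Big),$$ the term for $J=\emptyset$ being $f(q)$. *)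

(* Defs.v *)
From HB Require Import structures.
From mathcomp Require Import all_boot all_order all_algebra.
From mathcomp Require Import reals.
Set Implicit Arguments. Unset Strict Implicit. Unset Printing Implicit Defensive.
Import Order.TTheory GRing.Theory Num.Theory.
Local Open Scope ring_scope.

Definition is_affine_space (R : realType) (V : lmodType R) (Q : Type)
    (act : Q -> V -> Q) : Prop :=
  [/\ (forall q, act q 0 = q),
      (forall q v w, act (act q v) w = act q (v + w)) &
      (forall q q', exists! v, act q v = q')].

Definition polarization (R : realType) (V : lmodType R) (Q : Type)
    (act : Q -> V -> Q) (m : nat) (f : Q -> R) (q : Q) (w : 'I_m -> V) : R :=
  (-1) ^+ m * \sum_(J : {set 'I_m}) (-1) ^+ #|J| * f (act q (\sum_(j in J) w j)).

(* v^I = (v_{i_1},...,v_{i_k}) for I = {i_1 < ... < i_k}; enum I lists I in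
   increasing order. *)
Definition subvec (V : Type) (n : nat) (v : 'I_n -> V) (I : {set 'I_n})
    : 'I_#|I| -> V :=
  fun k => v (enum_val k).
Arguments subvec {V n} v I k.
Arguments polarization {R V Q} act m f q w.

(* Main.v *)
Require Import Defs.
From HB Require Import structures.
From mathcomp Require Import all_boot all_order all_algebra.
From mathcomp Require Import reals.
From mathcomp Require Import ring.
Import Order.TTheory GRing.Theory Num.Theory.
Local Open Scope ring_scope.
Set Implicit Arguments. Unset Strict Implicit.

Definition ind {R : numDomainType} (b : bool) : R := if b then 1 else 0.

Lemma sum_ind (R : numDomainType) (T : finType) (P : pred T) (F : T -> R) :
  \sum_(i | P i) F i = \sum_i ind (P i) * F i.
Proof. rewrite big_mkcond; apply: eq_bigr => i _; rewrite /ind; case: (P i); ring. Qed.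

Definition tog (T : finType) (x : T) (I : {set T}) :=
  if x \in I then I :\ x else x |: I.


Lemma togK (T : finType) (x : T) : involutive (tog x).
Proof.
move=> I; rewrite /tog; case: (boolP (x \in I)) => xI.
  by rewrite !inE eqxx /= setD1K.
by rewrite !inE eqxx /= setU1K.
Qed.

Lemma tog_sign (R : numDomainType) (T : finType) (x : T) (I : {set T}) :
  (-1 : R) ^+ #|tog x I| = - (-1) ^+ #|I|.
Proof.
rewrite /tog; case: (boolP (x \in I)) => xI.
  by rewrite [in RHS](cardsD1 x I) xI add1n exprS mulN1r opprK.
by rewrite cardsU1 xI add1n exprS mulN1r.
Qed.

Lemma tog_sum0 (R : numDomainType) (T : finType) (x : T) (P : pred {set T})
   (F : {set T} -> R) :
  (forall I, P (tog x I) = P I) -> (forall I, F (tog x I) = - F I) ->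
  \sum_(I | P I) F I = 0.
Proof.
move=> HP HF.
have E : \sum_(I | P I) F I = - \sum_(I | P I) F I.
  rewrite {1}(reindex_inj (can_inj (togK x))) /= -sumrN.
  by apply: eq_big => I; rewrite ?HP // => _; rewrite HF.
have : (\sum_(I | P I) F I) *+ 2 == 0 by rewrite mulr2n {1}E addNr.
by rewrite mulrn_eq0 /= => /eqP.
Qed.

Lemma alt (R : numDomainType) (T : finType) (A B : {set T}) :
  \sum_(I : {set T} | (A \subset I) && (I \subset B)) (-1 : R) ^+ #|I| =
  ind (A == B) * (-1) ^+ #|A|.
Proof.
case: (boolP (A == B)) => [/eqP <-|nAB].
  rewrite /ind mul1r (eq_bigl (fun I : {set T} => I == A)) ?big_pred1_eq // => I.
  by rewrite eq_sym eqEsubset andbC.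
rewrite /ind mul0r.
case: (boolP (A \subset B)) => sAB; last first.
  rewrite big_pred0 // => I; apply/negP => /andP [h1 h2]; move/negP: sAB; apply.
  exact: subset_trans h2.
have : B :\: A != set0.
  apply/negP => /eqP H; move/negP: nAB; apply; rewrite eqEsubset sAB /=.
  by rewrite -setD_eq0 H.
case/set0Pn => x; rewrite inE => /andP [xA xB].
apply: (tog_sum0 (x := x)) => [I|I]; last exact: tog_sign.
rewrite /tog; case: (boolP (x \in I)) => xI;
  apply/andP/andP => -[/subsetP h1 /subsetP h2]; split; apply/subsetP => y;
  move: (h1 y) (h2 y); rewrite !inE; case: (eqVneq y x) => [->|] //=;
  rewrite ?(negbTE xA) ?xB ?xI //=.
Qed.

Lemma alt_ind (R : numDomainType) (T : finType) (A B : {set T}) :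
  \sum_(I : {set T}) ind ((A \subset I) && (I \subset B)) * (-1 : R) ^+ #|I| =
  ind (A == B) * (-1) ^+ #|A|.
Proof. by rewrite -sum_ind alt. Qed.

Lemma setU_T (T : finType) (I J : {set T}) : (I :|: J == setT) = (~: I \subset J).
Proof.
apply/eqP/subsetP => [H y|H].
  rewrite inE => yI; have : y \in I :|: J by rewrite H inE.
  by rewrite inE (negbTE yI).
apply/setP => y; rewrite !inE; case: (boolP (y \in I)) => //= yI.
by apply: H; rewrite inE.
Qed.

Lemma Ccomp (R : numDomainType) (T : finType) (K K' : {set T}) :
  \sum_(I : {set T}) \sum_(I' : {set T})
    ind (I :|: I' == setT) * ind (K \subset I) * ind (K' \subset I') *
    ((-1 : R) ^+ #|I| * (-1) ^+ #|I'|)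
  = ind (K == K') * ((-1) ^+ #|[set: T]| * (-1) ^+ #|K|).
Proof.
transitivity (\sum_(I : {set T}) ind (K \subset I) * (-1 : R) ^+ #|I| *
   \sum_(I' : {set T}) ind ((~: I :|: K' \subset I') && (I' \subset setT)) * (-1) ^+ #|I'|).
  apply: eq_bigr => I _; rewrite big_distrr; apply: eq_bigr => I' _ /=.
  rewrite subsetT andbT subUset -setU_T /ind.
  case: (I :|: I' == setT); case: (K \subset I); case: (K' \subset I') => /=; ring.
under eq_bigr => I _ do rewrite alt_ind.
transitivity (\sum_(I : {set T}) ind ((K \subset I) && (I \subset K')) * (-1 : R) ^+ #|I| *
   (-1) ^+ #|[set: T]|).
  apply: eq_bigr => I _.
  have E : (I \subset K') = (~: I :|: K' == setT) by rewrite setU_T setCK.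
  rewrite E; case: (boolP (~: I :|: K' == setT)) => H.
    rewrite (eqP H) /ind; case: (K \subset I) => /=; ring.
  rewrite /ind; case: (K \subset I) => /=; ring.
rewrite -big_distrl /= alt_ind; ring.
Qed.

Lemma polar_sub (R : realType) (V : lmodType R) (Q : Type) (act : Q -> V -> Q)
  (f : Q -> R) (q : Q) (n : nat) (v : 'I_n -> V) (I : {set 'I_n}) :
  polarization act #|I| f q (subvec v I) =
  (-1) ^+ #|I| * \sum_(K : {set 'I_n}) ind (K \subset I) *
      ((-1) ^+ #|K| * f (act q (\sum_(j in K) v j))).
Proof.
rewrite /polarization /subvec; congr (_ * _).
rewrite -sum_ind.
rewrite (reindex (fun J : {set 'I_#|I|} => [set enum_val j | j in J])).
  apply: eq_big => J.
    apply/esym/subsetP => k /imsetP [j _ ->]; exact: enum_valP.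
  move=> _; rewrite card_imset; last exact: enum_val_inj.
  rewrite big_imset //; move=> j1 j2 _ _; exact: enum_val_inj.
exists (fun K : {set 'I_n} => (@enum_val _ (mem I)) @^-1: K).
  move=> J _; apply/setP => j; rewrite inE; apply/imsetP/idP => [[j' Hj' /enum_val_inj ->]//|jJ].
  by exists j.
move=> K; rewrite inE => KI; apply/setP => k; apply/imsetP/idP => [[j]|kK].
  by rewrite inE => H ->.
have kI := subsetP KI k kK.
by exists (enum_rank_in kI k); rewrite ?inE enum_rankK_in.
Qed.

Lemma comb (R : numDomainType) (T : finType) (h h' : {set T} -> R) :
  \sum_(I : {set T}) \sum_(I' : {set T} | I :|: I' == setT)
    ((-1) ^+ #|I| * \sum_(K : {set T}) ind (K \subset I) * ((-1) ^+ #|K| * h K)) *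
    ((-1) ^+ #|I'| * \sum_(K : {set T}) ind (K \subset I') * ((-1) ^+ #|K| * h' K))
  = (-1) ^+ #|[set: T]| * \sum_(J : {set T}) (-1) ^+ #|J| * (h J * h' J).
Proof.
transitivity (\sum_(I : {set T}) \sum_(I' : {set T}) \sum_(K : {set T}) \sum_(K' : {set T})
   ind (I :|: I' == setT) * ind (K \subset I) * ind (K' \subset I') *
    ((-1 : R) ^+ #|I| * (-1) ^+ #|I'|) * ((-1) ^+ #|K| * h K * ((-1) ^+ #|K'| * h' K'))).
  apply: eq_bigr => I _; rewrite sum_ind; apply: eq_bigr => I' _.
  set X := \sum_(K : {set T}) ind (K \subset I) * _.
  set Y := \sum_(K : {set T}) ind (K \subset I') * _.
  transitivity (ind (I :|: I' == setT) * ((-1 : R) ^+ #|I| * (-1) ^+ #|I'|) * (X * Y)).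
    ring.
  rewrite /X mulr_suml mulr_sumr; apply: eq_bigr => K _.
  rewrite /Y /= mulrA mulr_sumr; apply: eq_bigr => K' _.
  rewrite /ind; case: (I :|: I' == setT); case: (K \subset I);
    case: (K' \subset I') => /=; ring.
under eq_bigr => I _ do rewrite exchange_big.
under eq_bigr => I _ do under eq_bigr => K _ do rewrite exchange_big.
rewrite exchange_big.
under eq_bigr => K _ do rewrite exchange_big.
transitivity (\sum_(K : {set T}) \sum_(K' : {set T})
   ((-1) ^+ #|K| * h K * ((-1) ^+ #|K'| * h' K')) *
   (\sum_(I : {set T}) \sum_(I' : {set T})
    ind (I :|: I' == setT) * ind (K \subset I) * ind (K' \subset I') *
    ((-1 : R) ^+ #|I| * (-1) ^+ #|I'|))).
  apply: eq_bigr => K _; apply: eq_bigr => K' _; rewrite mulr_sumr.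
  apply: eq_bigr => I _; rewrite mulr_sumr; apply: eq_bigr => I' _; ring.
under eq_bigr => K _ do under eq_bigr => K' _ do rewrite Ccomp.
rewrite mulr_sumr; apply: eq_bigr => K _.
rewrite (bigD1 K) //= big1 => [|K' nK].
  rewrite /ind eqxx.
  have E : (-1 : R) ^+ #|K| * (-1) ^+ #|K| = 1 by rewrite -exprMn mulN1r opprK expr1n.
  transitivity (((-1 : R) ^+ #|K| * (-1) ^+ #|K|) *
    ((-1) ^+ #|[set: T]| * ((-1) ^+ #|K| * (h K * h' K)))); first ring.
  by rewrite E mul1r.
by rewrite /ind eq_sym (negbTE nK); ring.
Qed.

Theorem proposition3 (R : realType) (V : lmodType R) (Q : Type)
    (act : Q -> V -> Q) (haff : is_affine_space act)
    (f f' : Q -> R) (n : nat) (q : Q) (v : 'I_n -> V) :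
  polarization act n (fun x => f x * f' x) q v =
  \sum_(I : {set 'I_n}) \sum_(I' : {set 'I_n} | I :|: I' == setT)
     polarization act #|I| f q (subvec v I) * polarization act #|I'| f' q (subvec v I').
Proof.
under eq_bigr => I _ do under eq_bigr => I' _ do rewrite !polar_sub.
rewrite (comb (fun K => f (act q (\sum_(j in K) v j)))
              (fun K => f' (act q (\sum_(j in K) v j)))).
by rewrite cardsT card_ord /polarization.
Qed.
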